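(* Let $p,q,r\in\mathbb{Q}$ with $r\neq0$, and suppose $t^3-pt^2-qt-r$ has three distinct roots $\alpha_1,\alpha_2,\alpha_3$ with $\alpha_1\neq p$. Let $x,y,z$ be integers and $$M=\begin{pmatrix} x & rz & ry+prz\\ y & x+qz & qy+(pq+r)z\\ z & y+pz & x+py+(p^2+q)z\end{pmatrix}.$$ Suppose $|x+y\alpha_1+z\alpha_1^2|>|x+y\alpha_j+z\alpha_j^2|$ for $j=2,3$. Then for all $h,k\in\{1,2,3\}$, $$\lim_{n\to\infty}\frac{M^n_{2,2}}{M^n_{h,k}}=\bar M_{h,k},\qquad \bar M=\begin{pmatrix}\frac{\alpha_1^2(\alpha_1-p)}{r} & \frac{\alpha_1(\alpha_1-p)}{r} & \frac{\alpha_1-p}{r}\\ \alpha_1 & 1 & \frac{1}{\alpha_1}\\ \alpha_1(\alpha_1-p) & \alpha_1-p & \frac{\alpha_1-p}{\alpha_1}\end{pmatrix},$$ and $$\lim_{n\to\infty}\frac{M^n_{3,3}}{M^n_{h,k}}=\tilde M_{h,k},\qquad \tilde M=\begin{pmatrix}\frac{\alpha_1^3}{r} & \frac{\alpha_1^2}{r} & \frac{\alpha_1}{r}\\ \frac{\alpha_1^2}{\alpha_1-p} & \frac{\alpha_1}{\alpha_1-p} & \frac{1}{\alpha_1-p}\\ \alpha_1^2 & \alpha_1 & 1\end{pmatrix}.$$ (Equivalently, $\bar M_{1,1}=-\alpha_1(\alpha_2+\alpha_3)/(\alpha_2\alpha_3)$, $\tilde M_{1,1}=\alpha_1^2/(\alpha_2\alpha_3)$,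 etc., using $\alpha_1-p=-(\alpha_2+\alpha_3)$ and $r=\alpha_1\alpha_2\alpha_3$.)
   Context: $M^n_{a,b}$ denotes the $(a,b)$-entry of the $n$-th power of $M$. The matrix $M$ equals $xI+yA+zA^2$, where $A=\begin{pmatrix}0&0&r\\1&0&q\\0&1&p\end{pmatrix}$ is the companion matrix of $t^3-pt^2-qt-r$. *)

(* Defs.v *)
From Stdlib Require Import Reals QArith ZArith.
Open Scope R_scope.

Record Cx := mkCx { Re : R ; Im : R }.
Definition RtoC (a : R) : Cx := mkCx a 0.
Definition Cadd (u v : Cx) : Cx := mkCx (Re u + Re v) (Im u + Im v).
Definition Copp (u : Cx) : Cx := mkCx (- Re u) (- Im u).
Definition Csub (u v : Cx) : Cx := Cadd u (Copp v).
Definition Cmul (u v : Cx) : Cx :=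
  mkCx (Re u * Re v - Im u * Im v) (Re u * Im v + Im u * Re v).
Definition Cinv (u : Cx) : Cx :=
  let d := Re u * Re u + Im u * Im u in mkCx (Re u / d) (- Im u / d).
Definition Cdiv (u v : Cx) : Cx := Cmul u (Cinv v).
Definition Cnorm (u : Cx) : R := sqrt (Re u * Re u + Im u * Im u).

Definition Ccv (u : nat -> Cx) (l : Cx) : Prop :=
  forall eps : R, eps > 0 ->
    exists N : nat, forall n : nat, (n >= N)%nat -> Cnorm (Csub (u n) l) < eps.

Definition cubic (p q r : R) (t : Cx) : Cx :=
  Csub (Csub (Csub (Cmul t (Cmul t t)) (Cmul (RtoC p) (Cmul t t)))
             (Cmul (RtoC q) t)) (RtoC r).

Definition lin3 (x y z : R) (t : Cx) : Cx :=
  Cadd (Cadd (RtoC x) (Cmul (RtoC y) t)) (Cmul (RtoC z) (Cmul t t)).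

(* ---------- 3x3 real matrices, entries indexed by 1..3 ---------- *)
Definition mat3 := nat -> nat -> R.
Definition mid : mat3 := fun i j => if Nat.eqb i j then 1 else 0.
Definition mmul (A B : mat3) : mat3 :=
  fun i j => A i 1%nat * B 1%nat j + A i 2%nat * B 2%nat j + A i 3%nat * B 3%nat j.
Fixpoint mpow (A : mat3) (n : nat) : mat3 :=
  match n with
  | O => mid
  | S m => mmul (mpow A m) A
  end.

(* the matrix M of the statement (= x I + y A + z A^2, A the companion matrix) *)
Definition Mmat (p q r x y z : R) : mat3 := fun i j =>
  match i, j with
  | 1%nat, 1%nat => x
  | 1%nat, 2%nat => r * z
  | 1%nat, 3%nat => r * y + p * r * z
  | 2%nat, 1%nat => y
  | 2%nat, 2%nat => x + q * z
  | 2%nat, 3%nat => q * y + (p * q + r) * z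
  | 3%nat, 1%nat => z
  | 3%nat, 2%nat => y + p * z
  | 3%nat, 3%nat => x + p * y + (p * p + q) * z
  | _, _ => 0
  end.

Definition Mbar (p r : R) (a : Cx) : nat -> nat -> Cx := fun i j =>
  let ap := Csub a (RtoC p) in
  let rr := RtoC r in
  match i, j with
  | 1%nat, 1%nat => Cdiv (Cmul (Cmul a a) ap) rr
  | 1%nat, 2%nat => Cdiv (Cmul a ap) rr
  | 1%nat, 3%nat => Cdiv ap rr
  | 2%nat, 1%nat => a
  | 2%nat, 2%nat => RtoC 1
  | 2%nat, 3%nat => Cinv a
  | 3%nat, 1%nat => Cmul a ap
  | 3%nat, 2%nat => ap
  | 3%nat, 3%nat => Cdiv ap a
  | _, _ => RtoC 0
  end.

Definition Mtilde (p r : R) (a : Cx) : nat -> nat -> Cx := fun i j =>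
  let ap := Csub a (RtoC p) in
  let rr := RtoC r in
  match i, j with
  | 1%nat, 1%nat => Cdiv (Cmul a (Cmul a a)) rr
  | 1%nat, 2%nat => Cdiv (Cmul a a) rr
  | 1%nat, 3%nat => Cdiv a rr
  | 2%nat, 1%nat => Cdiv (Cmul a a) ap
  | 2%nat, 2%nat => Cdiv a ap
  | 2%nat, 3%nat => Cinv ap
  | 3%nat, 1%nat => Cmul a a
  | 3%nat, 2%nat => a
  | 3%nat, 3%nat => RtoC 1
  | _, _ => RtoC 0
  end.

(* Main.v *)
Require Import Defs.
From Stdlib Require Import Reals QArith ZArith Lra Lia Classical.
From Coquelicot Require Coquelicot.
Open Scope R_scope.

Module Hlp.
Import Coquelicot.Coquelicot.

Definition toC (u : Defs.Cx) : C := (Defs.Re u, Defs.Im u).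

Lemma toC_add u v : toC (Defs.Cadd u v) = (toC u + toC v)%C.
Proof. reflexivity. Qed.
Lemma toC_opp u : toC (Defs.Copp u) = (- toC u)%C.
Proof. reflexivity. Qed.
Lemma toC_sub u v : toC (Defs.Csub u v) = (toC u - toC v)%C.
Proof. reflexivity. Qed.
Lemma toC_mul u v : toC (Defs.Cmul u v) = (toC u * toC v)%C.
Proof. reflexivity. Qed.
Lemma toC_R a : toC (Defs.RtoC a) = RtoC a.
Proof. reflexivity. Qed.
Lemma toC_inv u : toC (Defs.Cinv u) = Cinv (toC u).
Proof. destruct u as [a b]. unfold toC, Defs.Cinv, Cinv; simpl.
  replace (a*(a*1) + b*(b*1)) with (a*a+b*b) by ring. reflexivity. Qed.
Lemma toC_div u v : toC (Defs.Cdiv u v) = (toC u / toC v)%C.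
Proof. unfold Defs.Cdiv. rewrite toC_mul, toC_inv. reflexivity. Qed.
Lemma Cnorm_mod u : Defs.Cnorm u = Cmod (toC u).
Proof. destruct u as [a b]. unfold Defs.Cnorm, Cmod, toC; simpl. f_equal; ring. Qed.
Lemma toC_inj u v : toC u = toC v -> u = v.
Proof. destruct u, v; unfold toC; simpl; intro H; inversion H; subst; reflexivity. Qed.
Open Scope C_scope.

Lemma Cmul_eq0 (x y : C) : x * y = 0 -> x <> 0 -> y = 0.
Proof. intros H Hx. replace y with (/x * (x*y)) by (field; auto). rewrite H. ring. Qed.

Lemma sub_neq (a b : C) : a <> b -> a - b <> 0.
Proof. intros H E. apply H. replace a with ((a - b) + b) by ring. rewrite E. ring. Qed.

Lemma vieta (a1 a2 a3 pc qc rc : C) :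
  a1 <> a2 -> a1 <> a3 -> a2 <> a3 ->
  a1*(a1*a1) - pc*(a1*a1) - qc*a1 - rc = 0 ->
  a2*(a2*a2) - pc*(a2*a2) - qc*a2 - rc = 0 ->
  a3*(a3*a3) - pc*(a3*a3) - qc*a3 - rc = 0 ->
  pc = a1+a2+a3 /\ qc = -(a1*a2+a1*a3+a2*a3) /\ rc = a1*a2*a3.
Proof.
  intros d12 d13 d23 c1 c2 c3.
  apply sub_neq in d12; apply sub_neq in d13; apply sub_neq in d23.
  assert (Hp : pc = a1+a2+a3).
  { assert (E : ((a1-a2)*(a1-a3)*(a2-a3)) * (a1+a2+a3-pc) = 0).
    { transitivity ((a2-a3)*(a1*(a1*a1) - pc*(a1*a1) - qc*a1 - rc)
        - (a1-a3)*(a2*(a2*a2) - pc*(a2*a2) - qc*a2 - rc)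
        + (a1-a2)*(a3*(a3*a3) - pc*(a3*a3) - qc*a3 - rc)).
      ring. rewrite c1, c2, c3. ring. }
    apply Cmul_eq0 in E.
    replace pc with (a1+a2+a3 - (a1+a2+a3-pc)) by ring. rewrite E. ring.
    apply Cmult_neq_0; [apply Cmult_neq_0|]; auto. }
  subst pc.
  assert (Hq : qc = -(a1*a2+a1*a3+a2*a3)).
  { assert (E : (a1-a2) * (-(a1*a2+a1*a3+a2*a3) - qc) = 0).
    { transitivity ((a1*(a1*a1) - (a1+a2+a3)*(a1*a1) - qc*a1 - rc)
        - (a2*(a2*a2) - (a1+a2+a3)*(a2*a2) - qc*a2 - rc)).
      ring. rewrite c1, c2. ring. }
    apply Cmul_eq0 in E; auto.
    replace qc with (-(a1*a2+a1*a3+a2*a3) - (-(a1*a2+a1*a3+a2*a3) - qc)) by ring.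
    rewrite E. ring. }
  subst qc. split; [reflexivity|split;[reflexivity|]].
  replace rc with (rc + (a1*(a1*a1) - (a1+a2+a3)*(a1*a1) - (-(a1*a2+a1*a3+a2*a3))*a1 - rc)) by (rewrite c1; ring).
  ring.
Qed.

Definition vv (b c : C) (h : nat) : C :=
  match h with 1%nat => b*c | 2%nat => -(b+c) | _ => 1 end.
Definition ww (a : C) (k : nat) : C :=
  match k with 1%nat => 1 | 2%nat => a | _ => a*a end.
Definition Ec (a b c : C) (h k : nat) : C := vv b c h * ww a k / ((a-b)*(a-c)).
Definition Lc (X Y Z : R) (a : C) : C := RtoC X + RtoC Y * a + RtoC Z * (a*a).

Lemma mpow_S A n h k : mpow A (S n) h k =
  (mpow A n h 1%nat * A 1%nat k + mpow A n h 2%nat * A 2%nat k + mpow A n h 3%nat * A 3%nat k)%R.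
Proof. reflexivity. Qed.

Lemma Cpow_S (c : C) n : c ^ (S n) = c * c ^ n.
Proof. reflexivity. Qed.

Lemma core (P Q R X Y Z : R) (a1 a2 a3 : C) :
  RtoC P = a1+a2+a3 -> RtoC Q = -(a1*a2+a1*a3+a2*a3) -> RtoC R = a1*a2*a3 ->
  a1 <> a2 -> a1 <> a3 -> a2 <> a3 ->
  forall n h k, (1 <= h <= 3)%nat -> (1 <= k <= 3)%nat ->
  RtoC (mpow (Mmat P Q R X Y Z) n h k) =
    Lc X Y Z a1 ^ n * Ec a1 a2 a3 h k + Lc X Y Z a2 ^ n * Ec a2 a1 a3 h k
    + Lc X Y Z a3 ^ n * Ec a3 a1 a2 h k.
Proof.
  intros Hp Hq Hr d12 d13 d23.
  apply sub_neq in d12; apply sub_neq in d13; apply sub_neq in d23.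
  assert (d21 : a2 - a1 <> 0) by (intro E; apply d12; replace (a1-a2) with (-(a2-a1)) by ring; rewrite E; ring).
  assert (d31 : a3 - a1 <> 0) by (intro E; apply d13; replace (a1-a3) with (-(a3-a1)) by ring; rewrite E; ring).
  assert (d32 : a3 - a2 <> 0) by (intro E; apply d23; replace (a2-a3) with (-(a3-a2)) by ring; rewrite E; ring).
  induction n as [|n IH]; intros h k Hh Hk.
  - simpl mpow. unfold mid, Ec.
    destruct h as [|[|[|[|h]]]]; try lia; destruct k as [|[|[|[|k]]]]; try lia;
    cbn [Nat.eqb vv ww Cpow]; field; repeat split; auto.
  - rewrite mpow_S, !RtoC_plus, !RtoC_mult, !IH by lia.
    rewrite !Cpow_S.
    set (t1 := Lc X Y Z a1 ^ n). set (t2 := Lc X Y Z a2 ^ n). set (t3 := Lc X Y Z a3 ^ n).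
    unfold Ec, Lc.
    destruct k as [|[|[|[|k]]]]; try lia; cbn [Mmat ww];
    repeat rewrite ?RtoC_plus, ?RtoC_mult; rewrite ?Hp, ?Hq, ?Hr;
    clearbody t1 t2 t3; field; repeat split; auto.
Qed.

Definition cvC (u : nat -> C) (l : C) : Prop :=
  forall eps : R, (eps > 0)%R -> exists N : nat, forall n, (n >= N)%nat -> (Cmod (u n - l) < eps)%R.

Lemma cv_geom (rho E : C) : (Cmod rho < 1)%R -> cvC (fun n => rho ^ n * E) 0.
Proof.
  intros Hr eps Heps.
  assert (HE := Cmod_ge_0 E). assert (Hrho := Cmod_ge_0 rho).
  destruct (pow_lt_1_zero (Cmod rho)) with (y := (eps / (Cmod E + 1))%R) as [N HN].
  { rewrite Rabs_pos_eq; auto. }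
  { apply Rdiv_lt_0_compat; lra. }
  exists N. intros n Hn. specialize (HN n Hn).
  replace (rho ^ n * E - 0) with (rho ^ n * E) by ring.
  rewrite Cmod_mult, Cmod_pow.
  rewrite Rabs_pos_eq in HN by (apply pow_le; auto).
  assert (Hp : (0 <= Cmod rho ^ n)%R) by (apply pow_le; auto).
  apply Rmult_lt_compat_r with (r := (Cmod E + 1)%R) in HN; [|lra].
  unfold Rdiv in HN. rewrite Rmult_assoc, Rinv_l in HN by lra.
  nra.
Qed.

Lemma cv_plus u v A B : cvC u A -> cvC v B -> cvC (fun n => u n + v n) (A + B).
Proof.
  intros Hu Hv eps Heps.
  destruct (Hu (eps/2)%R) as [N1 H1]; [lra|].
  destruct (Hv (eps/2)%R) as [N2 H2]; [lra|].
  exists (Nat.max N1 N2). intros n Hn.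
  replace (u n + v n - (A + B)) with ((u n - A) + (v n - B)) by ring.
  eapply Rle_lt_trans; [apply Cmod_triangle|].
  assert (h1 := H1 n ltac:(lia)). assert (h2 := H2 n ltac:(lia)). lra.
Qed.

Lemma cv_const A : cvC (fun _ => A) A.
Proof. intros eps Heps. exists O. intros. replace (A - A) with (RtoC 0) by ring.
  rewrite Cmod_0. lra. Qed.

Lemma cv_ext u v A : (forall n, u n = v n) -> cvC u A -> cvC v A.
Proof. intros E H eps He. destruct (H eps He) as [N HN]. exists N. intros n Hn.
  rewrite <- E. auto. Qed.

Lemma Cmod_sym (a b : C) : Cmod (a - b) = Cmod (b - a).
Proof. replace (a - b) with (-(b-a)) by ring. apply Cmod_opp. Qed.

Lemma cv_div u v A B : cvC u A -> cvC v B -> B <> 0 -> cvC (fun n => u n / v n) (A / B).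
Proof.
  intros Hu Hv HB eps Heps.
  assert (Hb : (0 < Cmod B)%R) by (apply Cmod_gt_0; auto).
  set (b := Cmod B) in *. set (k := Cmod (A / B)).
  assert (Hk : (0 <= k)%R) by apply Cmod_ge_0.
  destruct (Hv (b/2)%R) as [N1 H1]; [lra|].
  destruct (Hu (eps*b/4)%R) as [N2 H2]; [nra|].
  destruct (Hv (eps*b/(4*(k+1)))%R) as [N3 H3].
  { apply Rdiv_lt_0_compat; nra. }
  exists (Nat.max N1 (Nat.max N2 N3)). intros n Hn.
  assert (h1 := H1 n ltac:(lia)). assert (h2 := H2 n ltac:(lia)). assert (h3 := H3 n ltac:(lia)).
  set (e := Cmod (v n - B)) in *. set (d := Cmod (u n - A)) in *.
  assert (Hm : (b - e <= Cmod (v n))%R).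
  { assert (T := Cmod_triangle (v n) (B - v n)).
    replace (v n + (B - v n)) with B in T by ring.
    rewrite Cmod_sym in T. fold e in T. fold b in T. lra. }
  assert (Hvn : v n <> 0).
  { intro E. rewrite E, Cmod_0 in Hm. lra. }
  replace (u n / v n - A / B) with (((u n - A) - (A / B) * (v n - B)) / v n)
    by (field; auto).
  rewrite Cmod_div by auto.
  assert (Hnum : (Cmod ((u n - A) - (A / B) * (v n - B)) <= d + k * e)%R).
  { unfold Cminus at 1. eapply Rle_trans; [apply Cmod_triangle|].
    rewrite Cmod_opp, Cmod_mult. fold k d e. lra. }
  assert (He : (0 <= e)%R) by apply Cmod_ge_0.
  assert (Hke : ((k + 1) * e < eps * b / 4)%R).
  { apply Rmult_lt_compat_l with (r := (k+1)%R) in h3; [|lra].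
    replace ((k + 1) * (eps * b / (4 * (k + 1))))%R with (eps * b / 4)%R in h3 by (field; lra).
    exact h3. }
  assert (Hm2 : (b/2 < Cmod (v n))%R) by lra.
  apply Rmult_lt_reg_r with (r := Cmod (v n)); [lra|].
  unfold Rdiv. rewrite Rmult_assoc, Rinv_l by lra. nra.
Qed.

Lemma Cinv_0' : Cinv (RtoC 0) = RtoC 0.
Proof. unfold Cinv; simpl. apply injective_projections; simpl; unfold Rdiv; ring. Qed.

Lemma RtoC_div_gen (a b : R) : RtoC (a / b) = RtoC a / RtoC b.
Proof.
  destruct (Req_dec b 0) as [E|E].
  - subst. unfold Rdiv. rewrite Rinv_0, Rmult_0_r. unfold Cdiv. rewrite Cinv_0'. ring.
  - unfold Rdiv, Cdiv. rewrite RtoC_mult, RtoC_inv by auto. reflexivity.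
Qed.

Lemma div_cancel (c u v : C) : c <> 0 -> (c * u) / (c * v) = u / v.
Proof.
  intro Hc. destruct (classic (v = 0)) as [E|E].
  - subst. replace (c * 0) with (RtoC 0) by ring. unfold Cdiv. rewrite Cinv_0'. ring.
  - field. auto.
Qed.

Lemma ratio_lim (L1 L2 L3 A1 A2 A3 B1 B2 B3 : C) (f g : nat -> R) :
  (Cmod L2 < Cmod L1)%R -> (Cmod L3 < Cmod L1)%R -> B1 <> 0 ->
  (forall n, RtoC (f n) = L1^n*A1 + L2^n*A2 + L3^n*A3) ->
  (forall n, RtoC (g n) = L1^n*B1 + L2^n*B2 + L3^n*B3) ->
  cvC (fun n => RtoC (f n / g n)) (A1/B1).
Proof.
  intros H2 H3 HB Hf Hg.
  assert (HL : L1 <> 0).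
  { apply Cmod_gt_0. assert (T := Cmod_ge_0 L2). lra. }
  set (r2 := L2 / L1). set (r3 := L3 / L1).
  assert (Hr2 : (Cmod r2 < 1)%R).
  { unfold r2. rewrite Cmod_div by auto.
    assert (T := Cmod_gt_0 L1). destruct T as [T _]. specialize (T HL).
    apply Rmult_lt_reg_r with (r := Cmod L1); auto. unfold Rdiv.
    rewrite Rmult_assoc, Rinv_l by lra. lra. }
  assert (Hr3 : (Cmod r3 < 1)%R).
  { unfold r3. rewrite Cmod_div by auto.
    assert (T := Cmod_gt_0 L1). destruct T as [T _]. specialize (T HL).
    apply Rmult_lt_reg_r with (r := Cmod L1); auto. unfold Rdiv.
    rewrite Rmult_assoc, Rinv_l by lra. lra. }
  assert (E2 : L2 = L1 * r2) by (unfold r2; field; auto).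
  assert (E3 : L3 = L1 * r3) by (unfold r3; field; auto).
  replace (A1 / B1) with ((A1 + 0 + 0) / (B1 + 0 + 0)) by (f_equal; ring).
  apply cv_ext with (u := fun n => (A1 + r2^n*A2 + r3^n*A3) / (B1 + r2^n*B2 + r3^n*B3)).
  { intro n. rewrite RtoC_div_gen, Hf, Hg, E2, E3, !Cpow_mult_l.
    rewrite <- (div_cancel (L1 ^ n)). f_equal; ring.
    apply Cpow_nz; auto. }
  apply cv_div.
  - apply cv_plus; [apply cv_plus|]; [apply cv_const| |];
      apply cv_geom; auto.
  - apply cv_plus; [apply cv_plus|]; [apply cv_const| |];
      apply cv_geom; auto.
  - replace (B1 + 0 + 0) with B1 by ring. auto.
Qed.

Lemma toC_cubic P Q Rr t : toC (Defs.cubic P Q Rr t) =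
  toC t * (toC t * toC t) - RtoC P * (toC t * toC t) - RtoC Q * toC t - RtoC Rr.
Proof. reflexivity. Qed.

Lemma toC_lin3 X Y Z t : toC (Defs.lin3 X Y Z t) = Lc X Y Z (toC t).
Proof. reflexivity. Qed.

Lemma bridge (f : nat -> R) (l : Defs.Cx) (l' : C) :
  cvC (fun n => RtoC (f n)) l' -> toC l = l' -> Defs.Ccv (fun n => Defs.RtoC (f n)) l.
Proof.
  intros H E eps He. destruct (H eps He) as [N HN]. exists N. intros n Hn.
  rewrite Cnorm_mod, toC_sub, toC_R, E. auto.
Qed.

Lemma RtoC_eq0 (x : R) : RtoC x = 0 -> x = 0%R.
Proof. intro E. apply (f_equal fst) in E. simpl in E. exact E. Qed.

Lemma Ec_nz (b1 b2 b3 : C) h k : (1 <= h <= 3)%nat -> (1 <= k <= 3)%nat ->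
  b1 <> 0 -> b2 <> 0 -> b3 <> 0 -> b2 + b3 <> 0 -> b1 - b2 <> 0 -> b1 - b3 <> 0 ->
  Ec b1 b2 b3 h k <> 0.
Proof.
  intros Hh Hk n1 n2 n3 ns d2 d3.
  assert (Hv : vv b2 b3 h <> 0).
  { destruct h as [|[|[|[|h]]]]; try lia; cbn [vv].
    - apply Cmult_neq_0; auto.
    - intro E; apply ns. replace (b2 + b3) with (-(-(b2+b3))) by ring. rewrite E. ring.
    - apply C1_nz. }
  assert (Hw : ww b1 k <> 0).
  { destruct k as [|[|[|[|k]]]]; try lia; cbn [ww].
    - apply C1_nz.
    - auto.
    - apply Cmult_neq_0; auto. }
  unfold Ec. intro E. apply (Cmult_neq_0 _ _ Hv Hw).
  replace (vv b2 b3 h * ww b1 k) with (vv b2 b3 h * ww b1 k / ((b1 - b2) * (b1 - b3)) * ((b1 - b2) * (b1 - b3)))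
    by (field; auto).
  rewrite E. ring.
Qed.

Lemma main_gen (P Q Rr X Y Z : R) (a1 a2 a3 : Defs.Cx) :
  Rr <> 0%R ->
  Defs.cubic P Q Rr a1 = Defs.RtoC 0 ->
  Defs.cubic P Q Rr a2 = Defs.RtoC 0 ->
  Defs.cubic P Q Rr a3 = Defs.RtoC 0 ->
  a1 <> a2 -> a1 <> a3 -> a2 <> a3 ->
  a1 <> Defs.RtoC P ->
  (Defs.Cnorm (Defs.lin3 X Y Z a1) > Defs.Cnorm (Defs.lin3 X Y Z a2))%R ->
  (Defs.Cnorm (Defs.lin3 X Y Z a1) > Defs.Cnorm (Defs.lin3 X Y Z a3))%R ->
  forall h k : nat, (1 <= h <= 3)%nat -> (1 <= k <= 3)%nat ->
    Defs.Ccv (fun n => Defs.RtoC (mpow (Mmat P Q Rr X Y Z) n 2%nat 2%nat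
                      / mpow (Mmat P Q Rr X Y Z) n h k)%R)
        (Defs.Mbar P Rr a1 h k)
    /\
    Defs.Ccv (fun n => Defs.RtoC (mpow (Mmat P Q Rr X Y Z) n 3%nat 3%nat
                      / mpow (Mmat P Q Rr X Y Z) n h k)%R)
        (Defs.Mtilde P Rr a1 h k).
Proof.
  intros HR c1 c2 c3 d12 d13 d23 hp n2 n3 h k Hh Hk.
  apply (f_equal toC) in c1, c2, c3. rewrite toC_cubic, toC_R in c1, c2, c3.
  assert (e12 : toC a1 <> toC a2) by (intro E; apply d12, toC_inj, E).
  assert (e13 : toC a1 <> toC a3) by (intro E; apply d13, toC_inj, E).
  assert (e23 : toC a2 <> toC a3) by (intro E; apply d23, toC_inj, E).
  rewrite !Cnorm_mod, !toC_lin3 in n2, n3.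
  assert (hp' : toC a1 <> RtoC P) by (intro E; apply hp, toC_inj; rewrite E; reflexivity).
  set (b1 := toC a1) in *. set (b2 := toC a2) in *. set (b3 := toC a3) in *.
  destruct (vieta b1 b2 b3 (RtoC P) (RtoC Q) (RtoC Rr) e12 e13 e23 c1 c2 c3) as [Hp [Hq Hr]].
  assert (Hprod : b1 * b2 * b3 <> 0).
  { intro E. apply HR. apply RtoC_eq0. rewrite Hr. exact E. }
  assert (nb1 : b1 <> 0) by (intro E; apply Hprod; rewrite E; ring).
  assert (nb2 : b2 <> 0) by (intro E; apply Hprod; rewrite E; ring).
  assert (nb3 : b3 <> 0) by (intro E; apply Hprod; rewrite E; ring).
  assert (ns : b2 + b3 <> 0).
  { intro E. apply hp'. rewrite Hp. replace (b1 + b2 + b3) with (b1 + (b2 + b3)) by ring.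
    rewrite E. ring. }
  assert (ns' : b1 - (b1 + b2 + b3) <> 0).
  { intro E. apply ns. replace (b2 + b3) with (-(b1 - (b1 + b2 + b3))) by ring. rewrite E. ring. }
  assert (f12 := sub_neq _ _ e12). assert (f13 := sub_neq _ _ e13).
  assert (Hcore := core P Q Rr X Y Z b1 b2 b3 Hp Hq Hr e12 e13 e23).
  split.
  - apply bridge with (l' := Ec b1 b2 b3 2 2 / Ec b1 b2 b3 h k).
    + eapply ratio_lim with (L1 := Lc X Y Z b1) (L2 := Lc X Y Z b2) (L3 := Lc X Y Z b3); [exact n2 | exact n3 | | | ].
      * apply Ec_nz; auto.
      * intro n. apply Hcore; lia.
      * intro n. apply Hcore; lia.
    + unfold Defs.Mbar, Ec.
      destruct h as [|[|[|[|h]]]]; try lia; destruct k as [|[|[|[|k]]]]; try lia;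
      repeat rewrite ?toC_div, ?toC_mul, ?toC_sub, ?toC_inv, ?toC_R; fold b1; rewrite ?Hp, ?Hr;
      cbn [vv ww]; field; repeat split; auto.
  - apply bridge with (l' := Ec b1 b2 b3 3 3 / Ec b1 b2 b3 h k).
    + eapply ratio_lim with (L1 := Lc X Y Z b1) (L2 := Lc X Y Z b2) (L3 := Lc X Y Z b3); [exact n2 | exact n3 | | | ].
      * apply Ec_nz; auto.
      * intro n. apply Hcore; lia.
      * intro n. apply Hcore; lia.
    + unfold Defs.Mtilde, Ec.
      destruct h as [|[|[|[|h]]]]; try lia; destruct k as [|[|[|[|k]]]]; try lia;
      repeat rewrite ?toC_div, ?toC_mul, ?toC_sub, ?toC_inv, ?toC_R; fold b1; rewrite ?Hp, ?Hr;
      cbn [vv ww]; field; repeat split; auto.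
Qed.
End Hlp.

Theorem mainTheorem4 (p q r : Q) (a1 a2 a3 : Cx) (x y z : Z) :
  Q2R r <> 0 ->
  cubic (Q2R p) (Q2R q) (Q2R r) a1 = RtoC 0 ->
  cubic (Q2R p) (Q2R q) (Q2R r) a2 = RtoC 0 ->
  cubic (Q2R p) (Q2R q) (Q2R r) a3 = RtoC 0 ->
  a1 <> a2 -> a1 <> a3 -> a2 <> a3 ->
  a1 <> RtoC (Q2R p) ->
  Cnorm (lin3 (IZR x) (IZR y) (IZR z) a1) > Cnorm (lin3 (IZR x) (IZR y) (IZR z) a2) ->
  Cnorm (lin3 (IZR x) (IZR y) (IZR z) a1) > Cnorm (lin3 (IZR x) (IZR y) (IZR z) a3) ->
  forall h k : nat, (1 <= h <= 3)%nat -> (1 <= k <= 3)%nat ->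
    Ccv (fun n => RtoC (mpow (Mmat (Q2R p) (Q2R q) (Q2R r) (IZR x) (IZR y) (IZR z)) n 2%nat 2%nat
                      / mpow (Mmat (Q2R p) (Q2R q) (Q2R r) (IZR x) (IZR y) (IZR z)) n h k))
        (Mbar (Q2R p) (Q2R r) a1 h k)
    /\
    Ccv (fun n => RtoC (mpow (Mmat (Q2R p) (Q2R q) (Q2R r) (IZR x) (IZR y) (IZR z)) n 3%nat 3%nat
                      / mpow (Mmat (Q2R p) (Q2R q) (Q2R r) (IZR x) (IZR y) (IZR z)) n h k))
        (Mtilde (Q2R p) (Q2R r) a1 h k).
Proof.
  intros. apply Hlp.main_gen with (a2 := a2) (a3 := a3); assumption.
Qed.
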